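(* Let $n$ be a positive integer, let $p\ge q$ be positive integers, and let $B$ be a $p\times q$ matrix. For each positive divisor $k$ of $n$, let $F_k$ be the symmetric block matrix of size $kq+\frac{n}{k}p$ whose block rows and columns have sizes, in order, $p$, then $q$ repeated $k$ times, then $p$ repeated $\frac{n}{k}-1$ times; the block in a size-$p$ block row and a size-$q$ block column is $B$, the block in a size-$q$ block row and a size-$p$ block column is $B^T$, and all other blocks are zero. That is, $$F_k=\begin{bmatrix} 0 & B & \cdots & B & 0 & \cdots & 0\\ B^T & 0 & \cdots & 0 & B^T & \cdots & B^T\\ \vdots & \vdots & \ddots & \vdots & \vdots & \ddots & \vdots\\ B^T & 0 & \cdots & 0 & B^T & \cdots & B^T\\ 0 & B & \cdots & B & 0 & \cdots & 0\\ \vdots & \vdots & \ddots & \vdots & \vdots & \ddots & \vdots\\ 0 & B & \cdots & B & 0 & \cdots & 0\end{bmatrix}.$$ Then the matrices $F_k\oplus 0_{(n-\frac{n}{k})p+(1-k)q}$, as $k$ ranges over all positive divisors of $n$, are pairwise cospectral.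
   Context: For matrices $X,Y$, $X\oplus Y=\begin{bmatrix} X&0\\0&Y\end{bmatrix}$; $0_m$ is the $m\times m$ zero matrix. Two square matrices are cospectral if they have the same eigenvalues with the same multiplicities. *)

(* Defs.v *)
From HB Require Import structures.
From mathcomp Require Import all_boot all_order all_algebra.
Set Implicit Arguments. Unset Strict Implicit. Unset Printing Implicit Defensive.
Import Order.TTheory GRing.Theory Num.Theory.
Local Open Scope ring_scope.

Definition Bnat (R : rcfType) (p q : nat) (B : 'M[R]_(p, q)) (a b : nat) : R :=
  match (insub a : option 'I_p), (insub b : option 'I_q) with
  | Some i, Some j => B i j
  | _, _ => 0
  end.

(* Block structure of F_k (0-based scalar indices r):
   block 0 : rows [0, p)                     -- a "p-block"
   blocks 1..k : rows [p, p + k q), size q  -- "q-blocks"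
   remaining : rows [p + k q, ...), size p  -- "p-blocks" *)
Definition is_pblock (p q k r : nat) : bool := (r < p)%N || (p + k * q <= r)%N.

Definition blk_off (p q k r : nat) : nat :=
  if (r < p)%N then r
  else if (r < p + k * q)%N then ((r - p) %% q)%N
  else ((r - p - k * q) %% p)%N.

Definition Fentry (R : rcfType) (p q k : nat) (B : 'M[R]_(p, q)) (r c : nat) : R :=
  if is_pblock p q k r && ~~ is_pblock p q k c then
    Bnat B (blk_off p q k r) (blk_off p q k c)
  else if ~~ is_pblock p q k r && is_pblock p q k c then
    Bnat B (blk_off p q k c) (blk_off p q k r)
  else 0.

Definition Fmat (R : rcfType) (n p q k : nat) (B : 'M[R]_(p, q))
  : 'M[R]_(k * q + n %/ k * p) :=
  \matrix_(i, j) @Fentry R p q k B i j.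

(* F_k (+) 0_{(n - n/k) p + (1 - k) q}; the padding size is written in nat,
   (n - n/k) p + q - k q, which is the true value under the hypotheses. *)
Definition Fpad (R : rcfType) (n p q k : nat) (B : 'M[R]_(p, q))
  : 'M[R]_(k * q + n %/ k * p + ((n - n %/ k) * p + q - k * q)) :=
  block_mx (@Fmat R n p q k B) 0 0 0.

Definition cospectral (R : rcfType) (m m' : nat) (A : 'M[R]_m) (A' : 'M[R]_m') : Prop :=
  m = m' /\ forall x : R, mup x (char_poly A) = mup x (char_poly A').

(* Main.v *)
Require Import Defs.
From HB Require Import structures.
From mathcomp Require Import all_boot all_order all_algebra.
From mathcomp Require Import zify ring.
Import Order.TTheory GRing.Theory Num.Theory.

Lemma sum_eq1 (c d : nat) : \sum_(0 <= i < d) (c == i) = (c < d).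
Proof.
elim: d => [|d IH]; first by rewrite big_nil.
rewrite big_nat_recr //= IH ltnS leq_eqVlt; case: ltngtP => h; rewrite ?addn0 ?addn1 //=; lia.
Qed.

Lemma cnt_mod (c d j : nat) : 0 < d -> \sum_(0 <= i < j * d) (c == i %% d) = j * (c < d).
Proof.
move=> d0; elim: j => [|j IH]; first by rewrite mul0n big_nil.
rewrite mulSn (big_cat_nat (n := j * d)) ?leq0n ?leq_addl // IH addnC.
rewrite mulSnr; congr (_ + _).
rewrite (big_addn 0 (j * d + d) (j * d)) addKn -sum_eq1.
apply: eq_big_nat => i /andP [_ hi].
by rewrite addnC modnMDl modn_small.
Qed.

Definition alpha (p q k r : nat) : nat :=
  if is_pblock p q k r then blk_off p q k r else p + blk_off p q k r.

Lemma alpha_lt p q k m r : 0 < p -> 0 < q -> r < k * q + m * p -> alpha p q k r < p + q.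
Proof.
move=> p0 q0 hr; rewrite /alpha /is_pblock /blk_off.
case: (ltnP r p) => h1 /=; first exact: ltn_addr.
case: (ltnP r (p + k * q)) => h2 /=.
  by rewrite ltn_add2l ltn_pmod.
by apply: ltn_addr; apply: ltn_pmod.
Qed.

Lemma alpha_p p q k r : 0 < p -> (alpha p q k r < p) = is_pblock p q k r.
Proof.
move=> p0; rewrite /alpha; case: ifP => hb; last by rewrite ltnNge leq_addr.
move: hb; rewrite /is_pblock /blk_off; case: (ltnP r p) => //= h1 h2.
by rewrite ifF ?ltn_pmod // ltnNge h2.
Qed.

Lemma cnt_alpha p q k m a : 0 < p -> 0 < q -> 0 < m -> a < p + q ->
  \sum_(0 <= r < k * q + m * p) (a == alpha p q k r) = if a < p then m else k.
Proof.
move=> p0 q0 m0 ha.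
have h2 : p <= p + k * q by apply: leq_addr.
have h3 : p + k * q <= k * q + m * p.
  rewrite addnC leq_add2l; by rewrite leq_pmull.
rewrite (big_cat_nat (n := p)) //=; last exact: leq_trans h2 h3.
rewrite (@big_cat_nat _ _ _ (p + k * q) p (k * q + m * p)) //=.
have e1 : \sum_(0 <= i < p) (a == alpha p q k i) = (a < p).
  rewrite -sum_eq1; apply: eq_big_nat => i /andP [_ hi].
  by rewrite /alpha /is_pblock /blk_off hi.
have e2 : \sum_(p <= i < p + k * q) (a == alpha p q k i) = if a < p then 0 else k.
  rewrite (big_addn 0 (p + k * q) p) addKn.
  have key : forall i, i < k * q -> alpha p q k (i + p) = p + i %% q.
    move=> i hi.
    have hb : is_pblock p q k (i + p) = false.
      have f1 : (i + p < p) = false by rewrite ltnNge leq_addl.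
      have f2 : (p + k * q <= i + p) = false by rewrite leqNgt [i + p]addnC ltn_add2l hi.
      by rewrite /is_pblock f1 f2.
    rewrite /alpha hb /blk_off ifF; last by rewrite ltnNge leq_addl.
    by rewrite ifT ?addnK // addnC ltn_add2l.
  case: (ltnP a p) => hap.
    rewrite big1_seq // => i /andP [_]; rewrite mem_index_iota => /andP [_ hi].
    by rewrite key // ltn_eqF // (leq_trans hap (leq_addr _ _)).
  have hc : a - p < q by rewrite ltn_subLR.
  rewrite /= [in RHS](_ : k = k * (a - p < q)); last by rewrite hc muln1.
  rewrite -cnt_mod //; apply: eq_big_nat => i /andP [_ hi].
  by rewrite key // -{1}(subnKC hap) eqn_add2l.
have e3 : \sum_(p + k * q <= i < k * q + m * p) (a == alpha p q k i) = if a < p then m.-1 else 0.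
  rewrite (big_addn 0 (k * q + m * p) (p + k * q)).
  have -> : k * q + m * p - (p + k * q) = m.-1 * p.
    rewrite -{1}(prednK m0) mulSn; lia.
  have key : forall i, alpha p q k (i + (p + k * q)) = i %% p.
    move=> i.
    have hb : is_pblock p q k (i + (p + k * q)) = true.
      by rewrite /is_pblock leq_addl orbT.
    rewrite /alpha hb /blk_off ifF; last first.
      by apply/negbTE; rewrite -leqNgt (leq_trans (leq_addr _ _) (leq_addl _ _)).
    rewrite ifF; last by rewrite ltnNge leq_addl.
    by rewrite -subnDA addnK.
  under eq_big_nat => i _ do rewrite key.
  rewrite cnt_mod //; case: (ltnP a p) => hap; [exact: muln1 | exact: muln0].
rewrite e1 e2 e3; case: (ltnP a p) => hap /=.
  by rewrite add0n add1n prednK.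
by rewrite add0n addn0.
Qed.

Lemma Ntot n p q k : (0 < n)%N -> (q <= p)%N -> (k %| n)%N ->
  (k * q + n %/ k * p + ((n - n %/ k) * p + q - k * q))%N = (n * p + q)%N.
Proof.
move=> n0 qp kn.
have k0 : (0 < k)%N.
  by case: k kn => //; rewrite dvd0n => /eqP h; move: n0; rewrite h.
have hn : n = (k * (n %/ k))%N by rewrite mulnC divnK.
move: (n %/ k) hn => m hn; subst n.
have m0 : (0 < m)%N by move: n0; rewrite muln_gt0 => /andP [].
have h1 : ((k - 1) * q <= (k * m - m) * p)%N.
  apply: leq_mul => //.
  rewrite -{2}(mul1n m) -mulnBl; exact: leq_pmulr.
have h2 : ((k * m - m) * p = k * m * p - m * p)%N by rewrite mulnBl.
have h3 : (m * p <= k * m * p)%N by rewrite -mulnA leq_pmull.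
have h4 : ((k - 1) * q = k * q - q)%N by rewrite mulnBl mul1n.
have h5 : (q <= k * q)%N by rewrite leq_pmull.
lia.
Qed.

Local Open Scope ring_scope.
Lemma detAB (S : comNzRingType) s r (a : 'M[S]_(s,r)) (b : 'M[S]_(r,s)) (x : S) :
  x ^+ r * \det (x%:M - a *m b) = x ^+ s * \det (x%:M - b *m a).
Proof.
pose P := block_mx (x%:M : 'M_s) a b (1%:M : 'M_r).
pose L := block_mx (1%:M : 'M_s) 0 (-b) (x%:M : 'M_r).
have e1 : L *m P = block_mx x%:M a 0 (x%:M - b *m a).
  rewrite /L /P mulmx_block !mul1mx !mul0mx !addr0 mulmx1.
  by rewrite !mulNmx mul_mx_scalar mul_scalar_mx addNr addrC.
have e2 : P = block_mx 1%:M a 0 1%:M *m block_mx (x%:M - a *m b) 0 b 1%:M.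
  rewrite mulmx_block !mul1mx !mul0mx !mulmx1 !add0r ?addr0.
  by rewrite subrK.
have := congr1 determinant e1; rewrite det_mulmx det_ublock det_scalar.
rewrite /L det_lblock det1 det_scalar mul1r => <-; congr (_ * _).
by rewrite e2 det_mulmx det_ublock det_lblock !det1 !mul1r !mulr1.
Qed.

Lemma charAB (R : comNzRingType) s r (a : 'M[R]_(s,r)) (b : 'M[R]_(r,s)) :
  'X^r * char_poly (a *m b) = 'X^s * char_poly (b *m a).
Proof. by rewrite /char_poly /char_poly_mx !map_mxM detAB. Qed.

Lemma char_sim (R : fieldType) n (M G T : 'M[R]_n) :
  M *m T = T *m G -> \det T != 0 -> char_poly M = char_poly G.
Proof.
move=> e dT.
have e' : char_poly_mx M *m map_mx polyC T = map_mx polyC T *m char_poly_mx G.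
  rewrite /char_poly_mx mulmxBl mulmxBr mul_scalar_mx mul_mx_scalar -!map_mxM e.
  by [].
have := congr1 determinant e'; rewrite !det_mulmx det_map_mx mulrC => /mulfI.
apply; by rewrite polyC_eq0.
Qed.

Definition D0 (R : rcfType) (p q k m : nat) : 'M[R]_(k * q + m * p, p + q) :=
  \matrix_(r, c) ((c : nat) == alpha p q k r)%:R.

Definition Cmat (R : rcfType) (p q : nat) (B : 'M[R]_(p, q)) : 'M[R]_(p + q) :=
  \matrix_(a, b) (if (a < p)%N && ~~ (b < p)%N then Bnat B a (b - p)
                  else if ~~ (a < p)%N && (b < p)%N then Bnat B b (a - p) else 0).

Definition Gmat (R : rcfType) (p q n : nat) (B : 'M[R]_(p, q)) : 'M[R]_(p + q) :=
  \matrix_(a, b) (if (a < p)%N && ~~ (b < p)%N then Bnat B a (b - p)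
                  else if ~~ (a < p)%N && (b < p)%N then n%:R * Bnat B b (a - p) else 0).

Definition Tmat (R : rcfType) (p q k : nat) : 'M[R]_(p + q) :=
  diag_mx (\row_(a < p + q) (if (a < p)%N then k%:R else 1)).

Definition Dmat (R : rcfType) (p q k m : nat) : 'M[R]_(p + q) :=
  diag_mx (\row_(a < p + q) ((if (a < p)%N then m else k)%:R)).

Lemma rowsum (R : nzRingType) S (al : nat) (H : (al < S)%N) (f : 'I_S -> R) :
  \sum_(c < S) ((c : nat) == al)%:R * f c = f (Ordinal H).
Proof.
rewrite (bigD1 (Ordinal H)) //= eqxx mul1r big1 ?addr0 // => c hc.
rewrite (_ : ((c : nat) == al) = false) ?mul0r //.
apply/negbTE; apply: contra hc => /eqP e; apply/eqP; exact: val_inj.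
Qed.

Lemma Fmat_fact (R : rcfType) n p q k (B : 'M[R]_(p, q)) : (0 < p)%N -> (0 < q)%N ->
  Fmat n k B = D0 R p q k (n %/ k) *m Cmat R p q B *m (D0 R p q k (n %/ k))^T.
Proof.
move=> p0 q0; apply/matrixP => r s.
have hr := @alpha_lt p q k (n %/ k) r p0 q0 (ltn_ord r).
have hs := @alpha_lt p q k (n %/ k) s p0 q0 (ltn_ord s).
rewrite mxE [RHS]mxE.
transitivity (\sum_j Cmat R p q B (Ordinal hr) j * ((j : nat) == alpha p q k s)%:R); last first.
  apply: eq_bigr => j _; rewrite !mxE.
  under eq_bigr => i _ do rewrite !mxE.
  by rewrite rowsum.
under eq_bigr => j _ do rewrite mulrC.
rewrite rowsum mxE /= !alpha_p // /Fentry /alpha.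
case: (is_pblock p q k r); case: (is_pblock p q k s) => //=; by rewrite addKn.
Qed.

Lemma DtD (R : rcfType) p q k m : (0 < p)%N -> (0 < q)%N -> (0 < m)%N ->
  (D0 R p q k m)^T *m D0 R p q k m = Dmat R p q k m.
Proof.
move=> p0 q0 m0; apply/matrixP => a b; rewrite !mxE.
under eq_bigr => r _ do rewrite !mxE -natrM mulnb.
rewrite -natr_sum.
case: (eqVneq a b) => [<-|hab].
  under eq_bigr => r _ do rewrite andbb.
  rewrite ?eqxx ?mulr1n; congr (_%:R).
  by rewrite -(@cnt_alpha p q k m a p0 q0 m0 (ltn_ord a)) big_mkord.
rewrite big1 ?mulr0n //= => r _.
apply/eqP; rewrite eqb0; apply/andP => [[/eqP e1 /eqP e2]].
by move/eqP: hab; apply; apply: val_inj; rewrite /= e1 e2.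
Qed.

Lemma CDT (R : rcfType) n p q k m (B : 'M[R]_(p, q)) : n = (k * m)%N ->
  Cmat R p q B *m Dmat R p q k m *m Tmat R p q k = Tmat R p q k *m Gmat R p q n B.
Proof.
move=> hn; rewrite /Dmat /Tmat !mul_mx_diag mul_diag_mx; apply/matrixP => a b.
rewrite !mxE.
case: (ltnP a p) => ha; case: (ltnP b p) => hb /=.
- by rewrite !mul0r mulr0.
- by rewrite mulr1 mulrC.
- by rewrite mul1r hn natrM; ring.
- by rewrite !mul0r mulr0.
Qed.

Lemma detT (R : rcfType) p q k : (0 < k)%N -> \det (Tmat R p q k) != 0.
Proof.
move=> k0; rewrite det_diag; apply/prodf_neq0 => i _; rewrite mxE.
by case: ifP => _; [rewrite pnatr_eq0 -lt0n | exact: oner_neq0].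
Qed.

Lemma key (R : rcfType) n p q k (B : 'M[R]_(p, q)) :
  (0 < n)%N -> (0 < q)%N -> (q <= p)%N -> (k %| n)%N ->
  'X^(p + q) * char_poly (Fpad n k B) = 'X^(n * p + q) * char_poly (Gmat R p q n B).
Proof.
move=> n0 q0 qp kn; have p0 : (0 < p)%N := leq_trans q0 qp.
have k0 : (0 < k)%N.
  by case: k kn => //; rewrite dvd0n => /eqP h; move: n0; rewrite h.
rewrite -(@Ntot n p q k n0 qp kn).
have hn : n = (k * (n %/ k))%N by rewrite mulnC divnK.
have m0 : (0 < n %/ k)%N by move: n0; rewrite {1}hn muln_gt0 => /andP [].
have eF : Fpad n k B = col_mx (D0 R p q k (n %/ k)) 0 *m
     (Cmat R p q B *m (col_mx (D0 R p q k (n %/ k)) 0)^T).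
  rewrite /Fpad Fmat_fact // tr_col_mx mulmxA mul_col_mx mul_col_row.
  by rewrite !mul0mx trmx0 !mulmx0.
rewrite eF charAB -mulmxA tr_col_mx mul_row_col trmx0 mul0mx addr0 DtD //.
congr (_ * _); apply: (@char_sim _ _ _ _ (Tmat R p q k)); last exact: detT.
exact: CDT.
Qed.

Theorem theorem3p5 (R : rcfType) (n p q : nat) (B : 'M[R]_(p, q)) :
  (0 < n)%N -> (0 < q)%N -> (q <= p)%N ->
  forall k1 k2 : nat, (k1 %| n)%N -> (k2 %| n)%N ->
    cospectral (Fpad n k1 B) (Fpad n k2 B).
Proof.
move=> n0 q0 qp k1 k2 h1 h2; split; first by rewrite (@Ntot n p q k1) // (@Ntot n p q k2).
move=> x; congr (mup x _).
apply: (@mulfI _ ('X^(p + q))); first by rewrite expf_neq0 // polyX_eq0.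
by rewrite !key.
Qed.
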